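(* Let $\mathcal{S}\subseteq\mathcal{L}$, $\phi\in\mathcal{L}$, and let $\mathcal{AF}_{\vdash}=(\vdash,\overline{\cdot},\mathsf{id})$ be contrapositable with $\vdash$ satisfying Cut. If there is a $\Theta\subseteq\bigcap\mathsf{MCS}(\mathcal{AF}_{\vdash}(\mathcal{S}))$ with $\Theta\vdash\phi$, then $\bigcap\mathsf{MCS}(\mathcal{AF}_{\vdash}(\mathcal{S}))=\bigcap\mathsf{MCS}(\mathcal{AF}_{\vdash^{+\phi}}(\mathcal{S}))$.
   Context: $\mathcal{L}$ is a set of formulas; ${\vdash}\subseteq\wp_{\sf fin}(\mathcal{L})\times\mathcal{L}$ is arbitrary and $\overline{\cdot}:\mathcal{L}\to\wp(\mathcal{L})$. $\vdash^{+\phi}$ is the transitive closure of ${\vdash}\cup\{(\emptyset,\phi)\}$. Cut: for every $\phi$ and finite $\Gamma,\Delta$, if $\Gamma\vdash\phi$ and $\Delta\vdash^{+\phi}\gamma$ then $\Gamma\cup\Delta\vdash\gamma$. Contrapositable: for all finite $\Theta$, if $\Theta\vdash\gamma'$ with $\gamma'\in\overline{\gamma}$, then for every $\sigma\in\Theta$, $(\Theta\cup\{\gamma\})\setminus\{\sigma\}\vdash\sigma'$ for some $\sigma'\in\overline{\sigma}$. For a relation $\vdash'$ (here $\vdash$ or $\vdash^{+\phi}$), $\Theta\subseteq\mathcal{S}$ is $\mathcal{AF}_{\vdash'}(\mathcal{S})$-inconsistent iff there are $\Theta'\subseteq\Theta$ and $\gamma\in\Theta'$ with $\Theta'\setminus\{\gamma\}\vdash'\gamma'$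 for some $\gamma'\in\overline{\gamma}$, consistent otherwise; $\mathsf{MCS}(\mathcal{AF}_{\vdash'}(\mathcal{S}))$ is the set of maximal consistent subsets of $\mathcal{S}$ (consistent with no consistent proper superset within $\mathcal{S}$). *)

(* Defs.v *)
From Stdlib Require Import List.

Set Implicit Arguments.

Definition lset (L : Type) := L -> Prop.

Definition finite {L : Type} (A : lset L) : Prop :=
  exists l : list L, forall x, A x <-> In x l.

Definition sub {L : Type} (A B : lset L) : Prop := forall x, A x -> B x.
Definition emptyset {L : Type} : lset L := fun _ => False.
Definition union {L : Type} (A B : lset L) : lset L := fun x => A x \/ B x.
Definition single {L : Type} (a : L) : lset L := fun x => x = a.
Definition minus1 {L : Type} (A : lset L) (a : L) : lset L :=
  fun x => A x /\ x <> a.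

(* A derivability relation  |-  subset of P_fin(L) x L.  It is given as a
   predicate on all sets, but only its values on finite sets are ever used. *)
Definition drel (L : Type) := lset L -> L -> Prop.

(* |-^{+phi}: transitive closure of  |-  ∪ {(∅, phi)}, i.e. the closure of
   the finite pairs of  |-  and of (∅, phi) under (single-premise) chaining:
   if Δ ⊢ γ, δ ∈ Δ and Γ ⊢ δ then (Δ \ {δ}) ∪ Γ ⊢ γ. *)
Inductive plus_phi {L : Type} (D : drel L) (phi : L) : lset L -> L -> Prop :=
  | pp_base : forall G g, finite G -> D G g -> plus_phi D phi G g
  | pp_phi : plus_phi D phi emptyset phi
  | pp_trans : forall Dl g d G,
      plus_phi D phi Dl g -> Dl d -> plus_phi D phi G d ->
      plus_phi D phi (union (minus1 Dl d) G) g.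

Definition Cut {L : Type} (D : drel L) : Prop :=
  forall (phi : L) (G Dl : lset L) (g : L),
    finite G -> finite Dl -> D G phi -> plus_phi D phi Dl g ->
    D (union G Dl) g.

Definition contrapositable {L : Type} (D : drel L) (bar : L -> lset L) : Prop :=
  forall (Th : lset L) (g g' : L),
    finite Th -> D Th g' -> bar g g' ->
    forall s, Th s ->
      exists s', bar s s' /\ D (minus1 (union Th (single g)) s) s'.

(* AF_{D'}(S)-inconsistency of Θ ⊆ S (the assumption set is id, i.e. S). *)
Definition inconsistent {L : Type} (D' : drel L) (bar : L -> lset L)
    (Th : lset L) : Prop :=
  exists (Th' : lset L) (g g' : L),
    finite Th' /\ sub Th' Th /\ Th' g /\ bar g g' /\ D' (minus1 Th' g) g'.

Definition consistent {L : Type} (D' : drel L) (bar : L -> lset L)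
    (Th : lset L) : Prop := ~ inconsistent D' bar Th.

Definition MCS {L : Type} (D' : drel L) (bar : L -> lset L) (S : lset L)
    (E : lset L) : Prop :=
  sub E S /\ consistent D' bar E /\
  forall E', sub E E' -> sub E' S -> consistent D' bar E' -> sub E' E.

Definition capMCS {L : Type} (D' : drel L) (bar : L -> lset L) (S : lset L)
    : lset L :=
  fun x => forall E, MCS D' bar S E -> E x.

(* Main.v *)
Require Import Defs.
From Stdlib Require Import List Classical ClassicalEpsilon FunctionalExtensionality PropExtensionality.
Set Implicit Arguments.

Lemma set_ext {L} (A B : lset L) : sub A B -> sub B A -> A = B.
Proof.
  intros H1 H2. apply functional_extensionality; intro x.
  apply propositional_extensionality; split; auto.
Qed.

Definition psub {L} (X Y : lset L) := sub X Y /\ ~ sub Y X.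

Definition supf {L} (E0 : lset L) (C : lset (lset L)) : lset L :=
  fun x => E0 x \/ exists Y, C Y /\ Y x.

Inductive tower {L} (E0 : lset L) (f : lset L -> lset L) : lset L -> Prop :=
| tw_next : forall X, tower E0 f X -> tower E0 f (f X)
| tw_sup : forall C : lset (lset L), (forall Y, C Y -> tower E0 f Y) -> tower E0 f (supf E0 C).

Lemma tower_E0 {L} E0 f (x : lset L) :
  (forall X, sub X (f X)) -> tower E0 f x -> sub E0 x.
Proof.
  intros finf H; induction H.
  - intros z hz; apply finf; auto.
  - intros z hz; left; auto.
Qed.

Definition extreme {L} E0 f (c : lset L) :=
  forall x, tower E0 f x -> psub x c -> sub (f x) c.

Lemma ext_lemma {L} E0 f (c : lset L) :
  (forall X, sub X (f X)) -> tower E0 f c -> extreme E0 f c ->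
  forall x, tower E0 f x -> sub x c \/ sub (f c) x.
Proof.
  intros finf Tc Ec x Tx; induction Tx as [x Tx IH | C HC IH].
  - destruct IH as [H|H].
    + destruct (classic (sub c x)) as [H'|H'].
      * right. rewrite (set_ext H H'). intros z hz; exact hz.
      * left. apply Ec; auto. split; auto.
    + right. intros z hz; apply finf; auto.
  - destruct (classic (exists Y, C Y /\ sub (f c) Y)) as [[Y [CY HY]]|N].
    + right. intros z hz; right; exists Y; auto.
    + left. intros z [hz|[Y [CY hY]]].
      * eapply tower_E0; eauto.
      * destruct (IH Y CY) as [H|H]; auto.
        exfalso; apply N; eauto.
Qed.

Lemma all_extreme {L} E0 f (c : lset L) :
  (forall X, sub X (f X)) -> tower E0 f c -> extreme E0 f c.
Proof.
  intros finf Tc; induction Tc as [c Tc IH | C HC IH].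
  - intros x Tx [H1 H2].
    destruct (ext_lemma finf Tc IH Tx) as [H|H]; [|contradiction].
    destruct (classic (sub c x)) as [H'|H'].
    + rewrite (set_ext H H'). intros z hz; exact hz.
    + intros z hz. apply finf. exact (IH x Tx (conj H H') z hz).
  - intros x Tx [H1 H2].
    destruct (classic (exists Y, C Y /\ ~ sub Y x)) as [[Y [CY HY]]|N].
    + destruct (ext_lemma finf (HC Y CY) (IH Y CY) Tx) as [H|H].
      * intros z hz. right. exists Y. split; [exact CY|].
        exact (IH Y CY x Tx (conj H HY) z hz).
      * exfalso; apply HY. intros z hz; apply H, finf, hz.
    + exfalso; apply H2. intros z [hz|[Y [CY hY]]].
      * eapply tower_E0; eauto.
      * destruct (classic (Y z)) as [_|n]; [|contradiction].
        destruct (classic (sub Y x)) as [s|s]; auto.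
        exfalso; apply N; eauto.
Qed.

Lemma tower_chain {L} E0 f (x y : lset L) :
  (forall X, sub X (f X)) -> tower E0 f x -> tower E0 f y -> sub x y \/ sub y x.
Proof.
  intros finf Tx Ty.
  destruct (ext_lemma finf Ty (all_extreme finf Ty) Tx) as [H|H]; auto.
  right; intros z hz; apply H, finf, hz.
Qed.

Lemma finite_union {L} (A B : lset L) : finite A -> finite B -> finite (union A B).
Proof.
  intros [l1 H1] [l2 H2]. exists (l1 ++ l2). intro x. rewrite in_app_iff, <- H1, <- H2.
  unfold union; tauto.
Qed.

Lemma finite_single {L} (a : L) : finite (single a).
Proof. exists (a :: nil). intro x. simpl. unfold single. intuition. Qed.

Lemma finite_minus1 {L} (A : lset L) a : finite A -> finite (minus1 A a).
Proof.
  intros [l H].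
  assert (Hg : forall l : list L, exists l', forall x, In x l' <-> In x l /\ x <> a).
  { clear l H. intro l. induction l as [|b l IH0]; [|destruct IH0 as [l0 IH]].
    - exists nil. simpl. tauto.
    - destruct (classic (b = a)) as [e|e].
      + exists l0. intro x. rewrite IH. simpl. split; [tauto|].
        intros [[h|h] h']; [subst; contradiction|auto].
      + exists (b :: l0). intro x. simpl. rewrite IH.
        split; [intros [h|h]; [subst; auto|tauto]|].
        intros [[h|h] h']; auto. }
  destruct (Hg l) as [l' H'].
  exists l'. intro x. unfold minus1. rewrite H', H. tauto.
Qed.

Definition good {L} (D' : drel L) bar (S E0 X : lset L) :=
  sub E0 X /\ sub X S /\ consistent D' bar X.

Lemma next_ex {L} (D' : drel L) bar (S E0 X : lset L) :
  exists Y, sub X Y /\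
    ((exists Z, good D' bar S E0 Z /\ psub X Z) -> good D' bar S E0 Y /\ psub X Y) /\
    (~ (exists Z, good D' bar S E0 Z /\ psub X Z) -> Y = X).
Proof.
  destruct (classic (exists Z, good D' bar S E0 Z /\ psub X Z)) as [[Z [g p]]|n].
  - exists Z. split; [apply p|]. split; auto. intro n; exfalso; apply n; eauto.
  - exists X. split; [intros z h; exact h|]. split; [intro; contradiction|auto].
Qed.

Definition nextf {L} (D' : drel L) bar (S E0 X : lset L) : lset L :=
  proj1_sig (constructive_indefinite_description _ (next_ex D' bar S E0 X)).

Lemma nextf_spec {L} (D' : drel L) bar (S E0 X : lset L) :
  let Y := nextf D' bar S E0 X in
  sub X Y /\
    ((exists Z, good D' bar S E0 Z /\ psub X Z) -> good D' bar S E0 Y /\ psub X Y) /\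
    (~ (exists Z, good D' bar S E0 Z /\ psub X Z) -> Y = X).
Proof.
  unfold nextf. destruct (constructive_indefinite_description _ _) as [Y HY]. exact HY.
Qed.

Lemma tukey {L} (D' : drel L) bar (S E0 : lset L) :
  sub E0 S -> consistent D' bar E0 ->
  exists E, MCS D' bar S E /\ sub E0 E.
Proof.
  intros HS HC.
  set (f := nextf D' bar S E0).
  assert (finf : forall X, sub X (f X)) by (intro X; exact (proj1 (nextf_spec D' bar S E0 X))).
  assert (Tgood : forall X, tower E0 f X -> good D' bar S E0 X).
  { intros X TX; induction TX as [X TX IH | C HCt IH].
    - destruct (nextf_spec D' bar S E0 X) as [_ [h1 h2]].
      destruct (classic (exists Z, good D' bar S E0 Z /\ psub X Z)) as [e|e].
      + apply h1, e.
      + fold f in h2. rewrite (h2 e). exact IH.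
    - split; [intros z hz; left; exact hz|]. split.
      + intros z [hz|[Y [CY hY]]]; [auto|]. apply (IH Y CY); auto.
      + intros [Th' [g [g' [[l Hl] [Hsub [Hg [Hb Hd]]]]]]].
        assert (exists Y0, (Y0 = E0 \/ C Y0) /\ forall x, In x l -> Y0 x) as [Y0 [HY0 HY0l]].
        { assert (Hin : forall x, In x l -> supf E0 C x) by (intros x hx; apply Hsub, Hl, hx).
          clear Hl. induction l as [|a l IHl].
          - exists E0. split; auto. intros x [].
          - destruct IHl as [Y1 [HY1 HY1l]]. { intros x hx; apply Hin; right; auto. }
            assert (E0Y1 : sub E0 Y1).
            { destruct HY1 as [->|CY1]; [intros z h; exact h|apply (IH _ CY1)]. }
            destruct (Hin a (or_introl eq_refl)) as [ha|[Z [CZ hZ]]].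
            + exists Y1. split; auto. intros x [<-|hx]; auto.
            + assert (E0Z : sub E0 Z) by apply (IH _ CZ).
              destruct HY1 as [->|CY1].
              * exists Z. split; auto. intros x [<-|hx]; auto.
              * destruct (tower_chain finf (HCt _ CY1) (HCt _ CZ)) as [s|s].
                -- exists Z. split; auto. intros x [<-|hx]; auto.
                -- exists Y1. split; auto. intros x [<-|hx]; auto. }
        assert (CY0 : consistent D' bar Y0).
        { destruct HY0 as [->|CY0]; [exact HC|apply (IH _ CY0)]. }
        apply CY0. exists Th', g, g'. repeat split; auto.
        exists l; auto. intros x hx; apply HY0l, Hl, hx. }
  set (top := supf E0 (tower E0 f)).
  assert (Ttop : tower E0 f top) by (apply tw_sup; auto).
  destruct (Tgood _ Ttop) as [g1 [g2 g3]].
  exists top. split; [|exact g1].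
  split; [exact g2|]. split; [exact g3|].
  intros E' s1 s2 s3.
  destruct (classic (sub E' top)) as [h|h]; auto. exfalso.
  destruct (nextf_spec D' bar S E0 top) as [_ [h1 _]].
  destruct h1 as [_ [_ hp]].
  { exists E'. split; [split; [intros z hz; apply s1, g1, hz|split; auto]|split; auto]. }
  apply hp. intros z hz. right. exists (f top). split; auto. apply tw_next, Ttop.
Qed.

Lemma inc_D_Dp {L} (D : drel L) bar phi X :
  inconsistent D bar X -> inconsistent (plus_phi D phi) bar X.
Proof.
  intros [Th' [g [g' [fin [s [Hg [Hb Hd]]]]]]].
  exists Th', g, g'. repeat split; auto. apply pp_base; auto. apply finite_minus1; auto.
Qed.

Theorem corollary3 (L : Type) (D : drel L) (bar : L -> lset L)
    (S : lset L) (phi : L) :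
  contrapositable D bar ->
  Cut D ->
  (exists Th : lset L,
      finite Th /\ sub Th (capMCS D bar S) /\ D Th phi) ->
  forall x, capMCS D bar S x <-> capMCS (plus_phi D phi) bar S x.
Proof.
  intros Hcp Hcut [Th [finTh [subTh DTh]]].
  assert (AB : forall E, MCS D bar S E -> MCS (plus_phi D phi) bar S E).
  { intros E HE. destruct HE as [h1 [h2 h3]] eqn:HE'.
    assert (Hc : consistent (plus_phi D phi) bar E).
    { intros [Th' [g [g' [fin [s [Hg [Hb Hd]]]]]]].
      pose proof (Hcut phi Th (minus1 Th' g) g' finTh (finite_minus1 g fin) DTh Hd) as HD.
      set (Θ := union Th (minus1 Th' g)) in HD.
      assert (finΘ : finite Θ) by (apply finite_union; auto; apply finite_minus1; auto).
      set (K := union Θ (single g)).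
      assert (finK : finite K) by (apply finite_union; auto; apply finite_single).
      assert (subK : sub K E).
      { intros z [[hz|[hz _]]|hz].
        - apply (subTh z hz); auto.
        - apply s; auto.
        - unfold single in hz; subst; apply s; auto. }
      assert (Kg : K g) by (right; reflexivity).
      apply h2.
      destruct (classic (Θ g)) as [e|e].
      - destruct (Hcp Θ g g' finΘ HD Hb g e) as [s' [hb' hd']].
        exists K, g, s'. repeat split; auto.
      - exists K, g, g'. repeat split; auto.
        replace (minus1 K g) with Θ; auto.
        apply set_ext.
        + intros z hz. split; [left; auto|]. intro; subst; contradiction.
        + intros z [[hz|hz] hn]; auto. contradiction. }
    split; [exact h1|]. split; [exact Hc|].
    intros E' s1 s2 s3. apply h3; auto. intro i; apply s3, inc_D_Dp, i. }
  assert (BA : forall E, MCS (plus_phi D phi) bar S E -> MCS D bar S E).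
  { intros E [h1 [h2 h3]].
    assert (Hc : consistent D bar E) by (intro i; apply h2, inc_D_Dp, i).
    split; [exact h1|]. split; [exact Hc|].
    intros E' s1 s2 s3.
    destruct (tukey s2 s3) as [E'' [HM HE'']].
    pose proof (AB _ HM) as HM'.
    destruct HM' as [k1 [k2 k3]].
    assert (sub E'' E) by (apply h3; auto; intros z hz; apply HE'', s1, hz).
    intros z hz; auto. }
  intro x; split; intros H E HE; apply H; auto.
Qed.
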